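(* $z_2(5,3)\ge 9$.
   Context: Double Zarankiewicz number: consider configurations $G=([m],[n],E_1\cup E_2)$ where $[m]=\{1,\dots,m\}$, $E_1\subseteq[m]\times[n]$ is a set of 1-edges (cells) and $E_2$ is a set of 2-edges $(i,j;k,l)$ with $i,k\in[m]$, $j,l\in[n]$, $i\ne k$, $j\ne l$; the cells $(i,j)$ and $(k,l)$ are the two halves of this 2-edge. Simplicity condition: the halves of all 2-edges are pairwise distinct cells and none of them belongs to $E_1$. A cell is occupied if it lies in $E_1$ or is a half of some 2-edge. $G$ contains a generalized $C_4$-cycle if (1) there are four 1-edges $(i,j),(i,l),(k,j),(k,l)\in E_1$ with $i\ne k$, $j\ne l$; or (2) there is a 2-edge $(i,j;k,l)\in E_2$ whose two opposite cells $(i,l)$ and $(k,j)$ are both occupied; or (3) there are a 2-edge $(i,j;p,q)\in E_2$ and a cell $(k,l)$ such that the five cells $(k,l),(k,j),(k,q),(i,l),(p,l)$ are pairwise distinct and all occupied. $z_2(m,n)$ is the maximum of $|E_1|+|E_2|$ over all such $G$ satisfying the simplicity condition and containing no generalized $C_4$-cycle. *)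

(* Defs.v *)
From mathcomp Require Import all_boot.
Set Implicit Arguments. Unset Strict Implicit. Unset Printing Implicit Defensive.

Definition cell (m n : nat) := ('I_m * 'I_n)%type.

(* A 2-edge (i,j;k,l) is represented as the pair of its halves ((i,j),(k,l)). *)
Definition edge2 (m n : nat) := (cell m n * cell m n)%type.

Section Config.
Variables (m n : nat).

Definition is_edge2 (e : edge2 m n) : bool := (e.1.1 != e.2.1) && (e.1.2 != e.2.2).

Definition is_half (c : cell m n) (e : edge2 m n) : bool := (c == e.1) || (c == e.2).

Definition simple_config (E1 : {set cell m n}) (E2 : {set edge2 m n}) : bool :=
  [forall e in E2, is_edge2 e] &&
  [forall e in E2, forall f in E2, forall c,
     (is_half c e && is_half c f) ==> (e == f)] &&
  [forall e in E2, (e.1 \notin E1) && (e.2 \notin E1)].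

Definition occupied (E1 : {set cell m n}) (E2 : {set edge2 m n}) (c : cell m n) : bool :=
  (c \in E1) || [exists e in E2, is_half c e].

Definition cycle1 (E1 : {set cell m n}) : bool :=
  [exists i : 'I_m, exists k : 'I_m, exists j : 'I_n, exists l : 'I_n,
    [&& i != k, j != l, (i, j) \in E1, (i, l) \in E1, (k, j) \in E1 & (k, l) \in E1]].

Definition cycle2 (E1 : {set cell m n}) (E2 : {set edge2 m n}) : bool :=
  [exists e in E2,
    occupied E1 E2 (e.1.1, e.2.2) && occupied E1 E2 (e.2.1, e.1.2)].

Definition cycle3 (E1 : {set cell m n}) (E2 : {set edge2 m n}) : bool :=
  [exists e in E2, exists c : cell m n,
    let: ((i, j), (p, q)) := e in
    let: (k, l) := c in
    let cs := [:: (k, l); (k, j); (k, q); (i, l); (p, l)] in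
    uniq cs && all (occupied E1 E2) cs].

Definition has_gen_C4 (E1 : {set cell m n}) (E2 : {set edge2 m n}) : bool := [|| cycle1 E1, cycle2 E1 E2 | cycle3 E1 E2].

Definition admissible (E1 : {set cell m n}) (E2 : {set edge2 m n}) : bool := simple_config E1 E2 && ~~ has_gen_C4 E1 E2.

End Config.

Definition z2 (m n : nat) : nat :=
  \max_(E1 : {set cell m n}) \max_(E2 : {set edge2 m n} | admissible E1 E2)
     (#|E1| + #|E2|).

(* Main.v *)
Require Import Defs.
From mathcomp Require Import all_boot.

Lemma exL (T : finType) (l : seq T) (Hl : forall x, x \in l) (P : pred T) :
  [exists x, P x] = has P l.
Proof. by apply/existsP/hasP => [[x Px]|[x _ Px]]; exists x. Qed.
Lemma faL (T : finType) (l : seq T) (Hl : forall x, x \in l) (P : pred T) :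
  [forall x, P x] = all P l.
Proof. by apply/forallP/allP => H x //; apply: H. Qed.

Section L.
Variables (m n : nat) (lm : seq 'I_m) (ln : seq 'I_n).
Hypotheses (Hm : forall x, x \in lm) (Hn : forall x, x \in ln).
Variables (s1 : seq (cell m n)) (s2 : seq (edge2 m n)).
Let E1 : {set cell m n} := [set:: s1].
Let E2 : {set edge2 m n} := [set:: s2].
Let lc : seq (cell m n) := [seq (i, j) | i <- lm, j <- ln].
Lemma Hc : forall x, x \in lc.
Proof. by case=> i j; apply/allpairsP; exists (i, j). Qed.

Definition occ_l (x : cell m n) := (x \in s1) || has (is_half x) s2.

Lemma occE : occupied E1 E2 =1 occ_l.
Proof.
move=> x; rewrite /occupied /occ_l inE; congr orb.
by apply/exists_inP/hasP => [[e]|[e]]; rewrite ?inE => He Hx; exists e; rewrite ?inE.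
Qed.

Lemma fa (T : finType) (s : seq T) (P : pred T) : [forall x in [set:: s], P x] = all P s.
Proof. by apply/forall_inP/allP => H x Hx; apply: H; rewrite ?inE in Hx *. Qed.
Lemma ex (T : finType) (s : seq T) (P : pred T) : [exists x in [set:: s], P x] = has P s.
Proof. by apply/exists_inP/hasP => -[x Hx Px]; exists x; rewrite ?inE in Hx *. Qed.

Definition simple_l :=
  all (@is_edge2 m n) s2 &&
  all (fun e => all (fun f => all (fun c => (is_half c e && is_half c f) ==> (e == f)) lc) s2) s2 &&
  all (fun e => (e.1 \notin s1) && (e.2 \notin s1)) s2.

Lemma simpleE : simple_config E1 E2 = simple_l.
Proof.
rewrite /simple_config /simple_l fa fa fa.
congr andb; first congr andb.
  by apply: eq_all => e; rewrite fa; apply: eq_all => f; rewrite (faL _ _ Hc).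
by apply: eq_all => e; rewrite /E1 !inE.
Qed.

Definition cycle1_l :=
  has (fun i => has (fun k => has (fun j => has (fun l =>
    [&& i != k, j != l, (i, j) \in s1, (i, l) \in s1, (k, j) \in s1 & (k, l) \in s1]) ln) ln) lm) lm.
Lemma c1E : cycle1 E1 = cycle1_l.
Proof.
rewrite /cycle1 /cycle1_l (exL _ _ Hm); apply: eq_has => i.
rewrite (exL _ _ Hm); apply: eq_has => k.
rewrite (exL _ _ Hn); apply: eq_has => j.
rewrite (exL _ _ Hn); apply: eq_has => l.
by rewrite /E1 !inE.
Qed.

Definition cycle2_l := has (fun e => occ_l (e.1.1, e.2.2) && occ_l (e.2.1, e.1.2)) s2.
Lemma c2E : cycle2 E1 E2 = cycle2_l.
Proof. by rewrite /cycle2 ex; apply: eq_has => e; rewrite !occE. Qed.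

Definition cycle3_l := has (fun e : edge2 m n => has (fun c : cell m n =>
    let: ((i, j), (p, q)) := e in
    let: (k, l) := c in
    let cs := [:: (k, l); (k, j); (k, q); (i, l); (p, l)] in
    uniq cs && all occ_l cs) lc) s2.
Lemma c3E : cycle3 E1 E2 = cycle3_l.
Proof.
rewrite /cycle3 ex; apply: eq_has => -[[i j][p q]].
by rewrite (exL _ _ Hc); apply: eq_has => -[k l]; rewrite (eq_all occE).
Qed.

Lemma admE : admissible E1 E2 = simple_l && ~~ [|| cycle1_l, cycle2_l | cycle3_l].
Proof. by rewrite /admissible /has_gen_C4 simpleE c1E c2E c3E. Qed.
End L.

Notation o5 i := (@Ordinal 5 i isT).
Notation o3 i := (@Ordinal 3 i isT).
Notation c i j := ((o5 i, o3 j) : cell 5 3).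
Definition l5 : seq 'I_5 := [:: o5 0; o5 1; o5 2; o5 3; o5 4].
Definition l3 : seq 'I_3 := [:: o3 0; o3 1; o3 2].
Lemma H5 : forall x, x \in l5.
Proof. by case=> [[|[|[|[|[|k]]]]] H]. Qed.
Lemma H3 : forall x, x \in l3.
Proof. by case=> [[|[|[|k]]] H]. Qed.

Definition s1 := [:: c 1 2; c 4 1; c 0 2; c 1 0; c 4 0; c 3 1; c 2 2].
Definition s2 : seq (edge2 5 3) := [:: (c 1 1, c 2 0); (c 0 1, c 3 0)].

Lemma adm : admissible [set:: s1] [set:: s2].
Proof. rewrite (@admE 5 3 l5 l3 H5 H3 s1 s2). vm_compute. reflexivity. Qed.

Lemma cardset (T : finType) (s : seq T) : uniq s -> #|[set:: s]| = size s.
Proof.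
move=> Us; rewrite -(card_uniqP Us); apply: eq_card => x; by rewrite inE.
Qed.

Lemma card_sum : #|[set:: s1]| + #|[set:: s2]| = 9.
Proof. by rewrite !cardset. Qed.

Theorem theorem4p1 : 9 <= z2 5 3.
Proof.
  rewrite /z2 -card_sum.
  apply: leq_trans (leq_bigmax [set:: s1]).
  exact: (leq_bigmax_cond _ adm).
Qed.
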